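(* Let $0<\alpha,\beta<1$ satisfy $\beta>2-\frac1\alpha$ and $\alpha>2-\frac1\beta$, and let $S\subset\mathbb{R}$ be a Bernstein set. Then Schmidt's game with parameters $\alpha,\beta$ and target set $S$ is not determined, i.e., neither Alice nor Bob has a winning strategy.
   Context: A Bernstein set is a set $S\subset\mathbb{R}$ that has nonempty intersection with every closed uncountable subset of $\mathbb{R}$ but contains no closed uncountable subset of $\mathbb{R}$. Schmidt's game with parameters $0<\alpha,\beta<1$ and target set $S\subset\mathbb{R}$: Bob first chooses a compact interval $B_0$ of positive length. Alice then chooses a compact interval $A_0\subset B_0$ with $|A_0|=\alpha|B_0|$. Bob then chooses a compact interval $B_1\subset A_0$ with $|B_1|=\beta|A_0|$, and so on: $A_n\subset B_n$ with $|A_n|=\alpha|B_n|$ and $B_{n+1}\subset A_n$ with $|B_{n+1}|=\beta|A_n|$. Here $|I|$ is the length of the interval $I$. Alice wins if $\bigcap_{n\ge0}B_n$ has nonempty intersection with $S$; otherwise Bob wins. A strategy is a rule specifying a legal move for a player in every situation as a function of previously chosen intervals; it is winning if it guarantees that player wins regardless of the opponent's moves. The game is determined on $S$ if one of the players has a winning strategy, and not determined otherwise. *)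

(* Defs.v *)
From Stdlib Require Import Reals List.
From Stdlib Require Export Rtopology.
Open Scope R_scope.

Definition countable_set (A : R -> Prop) : Prop :=
  exists f : R -> nat, forall x y, A x -> A y -> f x = f y -> x = y.

Definition Bernstein (S : R -> Prop) : Prop :=
  (forall F : R -> Prop, closed_set F -> ~ countable_set F ->
     exists x, F x /\ S x) /\
  (forall F : R -> Prop, closed_set F -> ~ countable_set F ->
     ~ (forall x, F x -> S x)).

(** A compact interval is encoded as a pair (a, l) denoting [a, a + l];
    it has positive length iff 0 < l. *)
Definition interval := (R * R)%type.
Definition left_end (I : interval) : R := fst I.
Definition len (I : interval) : R := snd I.
Definition in_interval (I : interval) (x : R) : Prop :=
  left_end I <= x <= left_end I + len I.
Definition subinterval (J I : interval) : Prop :=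
  left_end I <= left_end J /\ left_end J + len J <= left_end I + len I.

Definition legal_first (B0 : interval) : Prop := 0 < len B0.
Definition legal_alice (alpha : R) (B A : interval) : Prop :=
  subinterval A B /\ len A = alpha * len B.
Definition legal_bob (beta : R) (A B : interval) : Prop :=
  subinterval B A /\ len B = beta * len A.

(** A play is a sequence p of intervals with p (2n) = B_n and p (2n+1) = A_n. *)
Definition play := nat -> interval.
Definition legal_play (alpha beta : R) (p : play) : Prop :=
  legal_first (p 0%nat) /\
  forall n : nat,
    legal_alice alpha (p (2 * n)%nat) (p (2 * n + 1)%nat) /\
    legal_bob beta (p (2 * n + 1)%nat) (p (2 * n + 2)%nat).

Definition history (p : play) (k : nat) : list interval := map p (seq 0 k).

Definition alice_wins (S : R -> Prop) (p : play) : Prop :=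
  exists x, S x /\ forall n : nat, in_interval (p (2 * n)%nat) x.

Definition strategy := list interval -> interval.

Definition alice_strategy (alpha : R) (sigma : strategy) : Prop :=
  forall (h : list interval) (B : interval),
    0 < len B -> legal_alice alpha B (sigma (h ++ B :: nil)).

Definition bob_strategy (beta : R) (tau : strategy) : Prop :=
  legal_first (tau nil) /\
  forall (h : list interval) (A : interval),
    0 < len A -> legal_bob beta A (tau (h ++ A :: nil)).

Definition follows_alice (sigma : strategy) (p : play) : Prop :=
  forall n : nat, p (2 * n + 1)%nat = sigma (history p (2 * n + 1)).

Definition follows_bob (tau : strategy) (p : play) : Prop :=
  p 0%nat = tau nil /\
  forall n : nat, p (2 * n + 2)%nat = tau (history p (2 * n + 2)).

Definition alice_winning (alpha beta : R) (S : R -> Prop) (sigma : strategy) : Prop :=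
  alice_strategy alpha sigma /\
  forall p : play, legal_play alpha beta p -> follows_alice sigma p -> alice_wins S p.

Definition bob_winning (alpha beta : R) (S : R -> Prop) (tau : strategy) : Prop :=
  bob_strategy beta tau /\
  forall p : play, legal_play alpha beta p -> follows_bob tau p -> ~ alice_wins S p.

Definition determined (alpha beta : R) (S : R -> Prop) : Prop :=
  (exists sigma, alice_winning alpha beta S sigma) \/
  (exists tau, bob_winning alpha beta S tau).

(* Main.v *)
Require Import Defs.
From Stdlib Require Import Reals Lra Lia List Classical ClassicalEpsilon.
Open Scope R_scope.

Definition in_all (p : play) (x : R) : Prop := forall k, in_interval (p k) x.
Definition nested (p : play) : Prop :=
  forall k, subinterval (p (S k)) (p k) /\ 0 < len (p k).

Lemma legal_nested a b p : 0 < a -> 0 < b -> legal_play a b p -> nested p.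
Proof.
  intros Ha Hb [H0 Hp].
  assert (Hev : forall n, 0 < len (p (2 * n)%nat)).
  { induction n as [|n IH]. exact H0.
    destruct (Hp n) as [[_ E1] [_ E2]].
    replace (2 * S n)%nat with (2 * n + 2)%nat by lia.
    rewrite E2, E1. apply Rmult_lt_0_compat; auto. apply Rmult_lt_0_compat; auto. }
  intro k. destruct (Nat.Even_or_Odd k) as [[n ->]|[n ->]].
  - destruct (Hp n) as [[S1 _] _]. replace (S (2 * n)) with (2 * n + 1)%nat by lia.
    split; auto.
  - destruct (Hp n) as [[_ E1] [S2 _]]. replace (S (2 * n + 1)) with (2 * n + 2)%nat by lia.
    split; auto. rewrite E1. apply Rmult_lt_0_compat; auto.
Qed.

Lemma nested_sub p : nested p -> forall k k', (k <= k')%nat -> subinterval (p k') (p k).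
Proof.
  intros Hn k k' Hle. induction Hle.
  - unfold subinterval. lra.
  - destruct (Hn m) as [[H1 H2] _]. destruct IHHle as [H3 H4]. unfold subinterval in *. split; lra.
Qed.

Lemma nested_len p : nested p -> forall k, 0 < len (p k).
Proof. intros Hn k. apply (Hn k). Qed.

Lemma nested_point p : nested p -> exists x, in_all p x.
Proof.
  intros Hn.
  set (E := fun y => exists k, y = left_end (p k)).
  assert (Hle : forall k k', left_end (p k) <= left_end (p k') + len (p k')).
  { intros k k'. destruct (Nat.le_ge_cases k k') as [H|H].
    - destruct (nested_sub p Hn k k' H) as [H1 H2]. pose proof (nested_len p Hn k'). lra.
    - destruct (nested_sub p Hn k' k H) as [H1 H2]. pose proof (nested_len p Hn k). lra. }
  destruct (completeness E) as [m [Hub Hlub]].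
  - exists (left_end (p 0%nat) + len (p 0%nat)). intros y [k ->]. apply Hle.
  - exists (left_end (p 0%nat)). exists 0%nat. reflexivity.
  - exists m. intro k. split.
    + apply Hub. exists k. reflexivity.
    + apply Hlub. intros y [k' ->]. apply Hle.
Qed.

Definition adh (A : R -> Prop) (x : R) : Prop :=
  forall eps, 0 < eps -> exists y, A y /\ Rabs (y - x) < eps.

Lemma closed_of_adh A : (forall x, adh A x -> A x) -> closed_set A.
Proof.
  intros H x nAx.
  apply NNPP. intro Hn. apply nAx. apply H. intros eps Heps.
  apply NNPP. intro Hy. apply Hn. exists (mkposreal eps Heps).
  intros y Hd. intro Ay. apply Hy. exists y. split; auto.
Qed.

Lemma adh_mono (A B : R -> Prop) x : (forall y, A y -> B y) -> adh A x -> adh B x.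
Proof. intros H Ha eps He. destruct (Ha eps He) as [y [H1 H2]]. eauto. Qed.

Lemma adh_union (A B : R -> Prop) x :
  adh (fun y => A y \/ B y) x -> adh A x \/ adh B x.
Proof.
  intros H. apply NNPP. intro Hn. apply not_or_and in Hn. destruct Hn as [Na Nb].
  apply not_all_ex_not in Na. destruct Na as [e1 Na].
  apply not_all_ex_not in Nb. destruct Nb as [e2 Nb].
  apply imply_to_and in Na. apply imply_to_and in Nb.
  destruct Na as [He1 Na]. destruct Nb as [He2 Nb].
  destruct (H (Rmin e1 e2)) as [y [[Ay|By] Hy]].
  - apply Rmin_pos; auto.
  - apply Na. exists y. split; auto. pose proof (Rmin_l e1 e2). lra.
  - apply Nb. exists y. split; auto. pose proof (Rmin_r e1 e2). lra.
Qed.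

Lemma adh_interval (A : R -> Prop) I x :
  (forall y, A y -> in_interval I y) -> adh A x -> in_interval I x.
Proof.
  intros H Ha. unfold in_interval in *.
  destruct (Rle_or_lt (left_end I) x) as [H1|H1].
  - destruct (Rle_or_lt x (left_end I + len I)) as [H2|H2]. lra.
    destruct (Ha (x - (left_end I + len I))) as [y [Ay Hy]]. lra.
    apply H in Ay. apply Rabs_def2 in Hy. lra.
  - destruct (Ha (left_end I - x)) as [y [Ay Hy]]. lra.
    apply H in Ay. apply Rabs_def2 in Hy. lra.
Qed.

Definition agree (c c' : nat -> bool) (j : nat) : Prop := forall i, (i < j)%nat -> c i = c' i.
Definition upd (c : nat -> bool) (j : nat) (b : bool) : nat -> bool :=
  fun i => if Nat.eqb i j then b else c i.

Fixpoint build (Q : (nat -> bool) -> nat -> Prop) (n : nat) : nat -> bool :=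
  match n with
  | O => fun _ => false
  | S n => let d := build Q n in
           if excluded_middle_informative (Q (upd d n false) (S n))
           then upd d n false else upd d n true
  end.

Lemma build_inv Q : Q (fun _ => false) 0%nat ->
  (forall d n, Q d n -> Q (upd d n false) (S n) \/ Q (upd d n true) (S n)) ->
  forall n, Q (build Q n) n.
Proof.
  intros H0 Hs n. induction n as [|n IH]; simpl. exact H0.
  destruct (excluded_middle_informative _) as [H|H]; auto.
  destruct (Hs _ _ IH); tauto.
Qed.

Lemma build_agree Q : forall n i, (i < n)%nat -> build Q n i = build Q (S i) i.
Proof.
  induction n as [|n IH]; intros i Hi. lia.
  destruct (Nat.eq_dec i n) as [->|Hne]. reflexivity.
  simpl build at 1.
  destruct (excluded_middle_informative _); unfold upd;
    rewrite (proj2 (Nat.eqb_neq i n) Hne); apply IH; lia.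
Qed.

Definition Fset (P : (nat -> bool) -> play) (x : R) : Prop := exists c, in_all (P c) x.

Lemma least_diff (c c' : nat -> bool) i : c i <> c' i ->
  exists j, agree c c' j /\ c j <> c' j.
Proof.
  induction i as [i IH] using (well_founded_induction Wf_nat.lt_wf). intros Hi.
  destruct (classic (agree c c' i)) as [Ha|Ha]. eauto.
  unfold agree in Ha. apply not_all_ex_not in Ha. destruct Ha as [i' Ha].
  apply imply_to_and in Ha. destruct Ha as [Hlt Hne]. apply (IH i'); auto.
Qed.

Lemma cantor (g : (nat -> bool) -> nat) :
  (forall c c', g c = g c' -> forall i, c i = c' i) -> False.
Proof.
  intros Hinj.
  assert (Hch : forall n, {c : nat -> bool | (exists c', g c' = n) -> g c = n}).
  { intro n. destruct (excluded_middle_informative (exists c', g c' = n)) as [He|He].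
    - destruct (constructive_indefinite_description _ He) as [c Hc]. exists c. auto.
    - exists (fun _ => false). intro. contradiction. }
  set (d := fun k => negb (proj1_sig (Hch k) k)).
  destruct (Hch (g d)) as [c Hc] eqn:E.
  assert (Hgc : g c = g d) by (apply Hc; eauto).
  pose proof (Hinj _ _ Hgc (g d)) as Heq.
  unfold d in Heq at 2. rewrite E in Heq. simpl in Heq.
  destruct (c (g d)); discriminate.
Qed.

Lemma generic (P : (nat -> bool) -> play) :
  (forall c, nested (P c)) ->
  (forall k, exists j, forall c c', agree c c' j -> P c k = P c' k) ->
  (forall c c' j, agree c c' j -> c j <> c' j ->
     forall x y, in_all (P c) x -> in_all (P c') y -> x <> y) ->
  closed_set (Fset P) /\ ~ countable_set (Fset P).
Proof.
  intros Hn Hpre Hsep. split.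
  - apply closed_of_adh. intros x Hx.
    set (G := fun c j y => exists c', agree c c' j /\ in_all (P c') y).
    set (Q := fun c j => adh (G c j) x).
    assert (HQ : forall n, Q (build Q n) n).
    { apply build_inv.
      - unfold Q. revert Hx. apply adh_mono. intros y [c Hc]. exists c. split; auto.
        intros i Hi. lia.
      - intros d n Hd. apply adh_union. revert Hd. apply adh_mono.
        intros y [c' [Ha Hy]]. destruct (c' n) eqn:Ec.
        + right. exists c'. split; auto. intros i Hi. unfold upd.
          destruct (Nat.eqb_spec i n). subst; auto. apply Ha. lia.
        + left. exists c'. split; auto. intros i Hi. unfold upd.
          destruct (Nat.eqb_spec i n). subst; auto. apply Ha. lia. }
    set (c := fun i => build Q (S i) i).
    exists c. intro k. destruct (Hpre k) as [j Hj].
    specialize (HQ j). unfold Q in HQ.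
    apply (adh_interval (G (build Q j) j)); auto.
    intros y [c' [Ha Hy]]. rewrite (Hj c c'). apply Hy.
    intros i Hi. rewrite <- Ha by auto. unfold c. symmetry. apply build_agree. auto.
  - intros [f Hf].
    assert (Hpt : forall c, {x | in_all (P c) x}).
    { intro c. apply constructive_indefinite_description. apply nested_point. auto. }
    apply (cantor (fun c => f (proj1_sig (Hpt c)))).
    intros c c' Heq i. apply NNPP. intro Hne.
    destruct (least_diff c c' i Hne) as [j [Ha Hj]].
    destruct (Hpt c) as [x Hx] eqn:E1. destruct (Hpt c') as [y Hy] eqn:E2.
    simpl in Heq. apply Hf in Heq; [| exists c; auto | exists c'; auto].
    exact (Hsep c c' j Ha Hj x y Hx Hy Heq).
Qed.

Definition ext (b : bool) (r : R) (J : interval) : interval :=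
  if b then (left_end J + (1 - r) * len J, r * len J) else (left_end J, r * len J).

Lemma ext_legal b r J : 0 < r < 1 -> 0 <= len J ->
  subinterval (ext b r J) J /\ len (ext b r J) = r * len J.
Proof.
  intros Hr HJ. destruct b; unfold subinterval, ext, left_end, len in *; simpl; split; try lra.
  split. nra. nra. split. lra. nra.
Qed.

Lemma drift (rho om : R) (b : bool) (J : interval) (q : nat -> interval) (N : nat) :
  0 < rho < 1 -> 0 < om < 1 -> 0 < len J ->
  q 0%nat = ext b rho J ->
  (forall i, (i < N)%nat -> subinterval (q (2*i+1)%nat) (q (2*i)%nat) /\
        len (q (2*i+1)%nat) = om * len (q (2*i)%nat) /\
        q (2*i+2)%nat = ext b rho (q (2*i+1)%nat)) ->
  forall i, (i <= N)%nat -> len (q (2*i)%nat) = rho * (om*rho)^i * len J /\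
   (if b then (1-om*rho)*(left_end J + len J - left_end (q(2*i)%nat))
    else (1-om*rho)*(left_end (q(2*i)%nat) + len(q(2*i)%nat) - left_end J))
   <= (1-om)*rho*len J + om*(1-rho)*len(q(2*i)%nat).
Proof.
  intros Hr Ho HJ H0 Hs i. induction i as [|i IH]; intros Hi.
  - change (2*0)%nat with 0%nat. rewrite H0. unfold ext. destruct b; simpl; unfold left_end, len; simpl; split; try ring; nra.
  - destruct IH as [IL IB]. lia.
    destruct (Hs i) as [[S1 S2] [E1 E2]]. lia.
    replace (2 * S i)%nat with (2*i+2)%nat by lia. rewrite E2.
    set (A := q (2*i)%nat) in *. set (B := q (2*i+1)%nat) in *.
    assert (HD : 0 < 1 - om * rho) by nra.
    assert (Hl : 0 <= len A) by (rewrite IL; assert (0 < (om*rho)^i) by (apply pow_lt; nra); nra).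
    unfold ext; destruct b; simpl; unfold left_end, len in *; simpl;
    split; try (rewrite E1, IL; simpl; ring).
    + assert (Hv : fst A <= fst B) by lra.
      assert (K: (1 - om*rho) * (fst A - fst B) <= 0) by nra.
      rewrite E1. nra.
    + assert (Hv : fst B + snd B <= fst A + snd A) by lra.
      assert (K: (1 - om*rho) * (fst B + snd B - (fst A + snd A)) <= 0) by nra.
      rewrite E1 in *. nra.
Qed.

Lemma sep_core (rho om : R) (M : nat) (p p' : play) (K0 : nat) (b : bool) :
  0 < rho < 1 -> 0 < om < 1 ->
  2 * om * (1 - rho) * rho * (om*rho)^M < 1 - rho * (2 - om) ->
  p K0 = p' K0 -> 0 < len (p K0) ->
  p (K0+1)%nat = ext b rho (p K0) -> p' (K0+1)%nat = ext (negb b) rho (p' K0) ->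
  (forall i, (i < M)%nat ->
     subinterval (p (K0+1+(2*i+1))%nat) (p (K0+1+2*i)%nat) /\
     len (p (K0+1+(2*i+1))%nat) = om * len (p (K0+1+2*i)%nat) /\
     p (K0+1+(2*i+2))%nat = ext b rho (p (K0+1+(2*i+1))%nat)) ->
  (forall i, (i < M)%nat ->
     subinterval (p' (K0+1+(2*i+1))%nat) (p' (K0+1+2*i)%nat) /\
     len (p' (K0+1+(2*i+1))%nat) = om * len (p' (K0+1+2*i)%nat) /\
     p' (K0+1+(2*i+2))%nat = ext (negb b) rho (p' (K0+1+(2*i+1))%nat)) ->
  forall x y, in_interval (p (K0+1+2*M)%nat) x -> in_interval (p' (K0+1+2*M)%nat) y -> x <> y.
Proof.
  intros Hr Ho Hc E0 HL E1 E1' Hs Hs' x y Hx Hy.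
  rewrite <- (Nat.add_0_r (K0+1)) in E1, E1'.
  pose proof (drift rho om b (p K0) (fun i => p (K0+1+i)%nat) M Hr Ho HL E1 Hs M (le_n _)) as [L1 B1].
  rewrite E0 in HL.
  pose proof (drift rho om (negb b) (p' K0) (fun i => p' (K0+1+i)%nat) M Hr Ho HL E1' Hs' M (le_n _)) as [L2 B2].
  cbv beta in L1, B1, L2, B2. rewrite <- E0 in L2, B2.
  set (J := p K0) in *. rewrite <- E0 in HL.
  set (A := p (K0 + 1 + 2 * M)%nat) in *. set (A' := p' (K0 + 1 + 2 * M)%nat) in *.
  assert (Hpw : 0 < (om*rho)^M) by (apply pow_lt; nra).
  assert (HD : 0 < 1 - om * rho) by nra.
  unfold in_interval in *.
  assert (K : 2 * om * (1 - rho) * rho * (om*rho)^M * len J < (1 - rho * (2 - om)) * len J) by nra.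
  destruct b; simpl in B1, B2.
  - (* p goes right, p' goes left: y < x *)
    assert ((1 - om*rho) * (left_end A' + len A' - left_end A) < 0).
    { rewrite L1 in B1. rewrite L2 in B2. rewrite L2. rewrite L1 in *. nra. }
    assert (left_end A' + len A' - left_end A < 0) by nra. lra.
  - assert ((1 - om*rho) * (left_end A + len A - left_end A') < 0).
    { rewrite L1 in B1. rewrite L2 in B2. rewrite L1. rewrite L2 in *. nra. }
    assert (left_end A + len A - left_end A' < 0) by nra. lra.
Qed.

Fixpoint hist (M : nat -> list interval -> interval) (k : nat) : list interval :=
  match k with O => nil | S k => hist M k ++ M k (hist M k) :: nil end.
Definition mkplay (M : nat -> list interval -> interval) : play := fun k => M k (hist M k).

Lemma history_mk M k : history (mkplay M) k = hist M k.
Proof.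
  induction k as [|k IH]. reflexivity.
  unfold history in *. rewrite seq_S, map_app, IH. reflexivity.
Qed.

Lemma last_hist M k : last (hist M (S k)) (0,0) = mkplay M k.
Proof. simpl. apply last_last. Qed.

Lemma hist_agree M M' K : (forall k h, (k < K)%nat -> M k h = M' k h) ->
  forall k, (k <= K)%nat -> hist M k = hist M' k.
Proof.
  intros H k. induction k as [|k IH]; intros Hk. reflexivity.
  simpl. rewrite IH by lia. rewrite H by lia. reflexivity.
Qed.

Lemma mk_agree M M' K : (forall k h, (k < K)%nat -> M k h = M' k h) ->
  forall k, (k < K)%nat -> mkplay M k = mkplay M' k.
Proof.
  intros H k Hk. unfold mkplay. rewrite (hist_agree M M' K H k) by lia. apply H. lia.
Qed.

Lemma even2 n : Nat.even (2*n) = true.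
Proof. induction n as [|n IH]. reflexivity. replace (2 * S n)%nat with (S (S (2*n))) by lia. exact IH. Qed.
Lemma odd2 n : Nat.even (2*n+1) = false.
Proof. induction n as [|n IH]. reflexivity. replace (2 * S n + 1)%nat with (S (S (2*n+1))) by lia. exact IH. Qed.
Lemma div2a n : ((2*n)/2 = n)%nat. Proof. rewrite Nat.mul_comm. apply Nat.div_mul. lia. Qed.
Lemma div2b n : ((2*n+1)/2 = n)%nat. Proof. rewrite Nat.mul_comm, Nat.div_add_l by lia. simpl. lia. Qed.

Lemma bitbound k' j m : (k' < 2 * (j * S m))%nat -> ((k'/2)/S m < j)%nat.
Proof.
  intros H. apply Nat.Div0.div_lt_upper_bound. 
  rewrite Nat.mul_comm. apply Nat.Div0.div_lt_upper_bound. lia.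
Qed.

Lemma bitle k' m : ((k'/2)/S m <= k')%nat.
Proof.
  apply Nat.Div0.div_le_upper_bound. apply Nat.Div0.div_le_upper_bound. nia.
Qed.

Lemma blockdiv j m r : (r < S m)%nat -> ((j * S m + r) / S m = j)%nat.
Proof.
  intros H. rewrite Nat.div_add_l by lia. rewrite Nat.div_small by lia. lia.
Qed.

Lemma uniq_pt a b p x y : 0 < a < 1 -> 0 < b < 1 -> legal_play a b p ->
  (forall n, in_interval (p (2*n)%nat) x) -> (forall n, in_interval (p (2*n)%nat) y) -> x = y.
Proof.
  intros Ha Hb [H0 Hp] Hx Hy.
  assert (HL : forall n, len (p (2*n)%nat) = (a*b)^n * len (p 0%nat)).
  { induction n as [|n IH]. simpl; ring.
    destruct (Hp n) as [[_ E1] [_ E2]].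
    replace (2 * S n)%nat with (2 * n + 2)%nat by lia. rewrite E2, E1, IH. simpl. ring. }
  apply NNPP. intro Hne.
  assert (He : 0 < Rabs (x - y) / len (p 0%nat)).
  { unfold legal_first in H0. apply Rdiv_lt_0_compat; auto. apply Rabs_pos_lt. lra. }
  destruct (pow_lt_1_zero (a*b)) with (y := Rabs (x - y) / len (p 0%nat)) as [N HN]; auto.
  rewrite Rabs_right by nra. nra.
  specialize (HN N (le_n _)). rewrite Rabs_right in HN by (apply Rle_ge, pow_le; nra).
  specialize (Hx N). specialize (Hy N). unfold in_interval in *. rewrite HL in Hx, Hy.
  unfold legal_first in H0.
  apply (Rmult_lt_compat_r (len (p 0%nat))) in HN; auto.
  unfold Rdiv in HN. rewrite Rmult_assoc, Rinv_l, Rmult_1_r in HN by lra.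
  destruct (Rcase_abs (x - y)).
  - rewrite Rabs_left in HN by lra. lra.
  - rewrite Rabs_right in HN by lra. lra.
Qed.

Lemma choose_M rho om : 0 < rho < 1 -> 0 < om < 1 -> rho * (2 - om) < 1 ->
  exists M, 2 * om * (1 - rho) * rho * (om*rho)^M < 1 - rho * (2 - om).
Proof.
  intros Hr Ho Hc.
  destruct (pow_lt_1_zero (om*rho)) with (y := (1 - rho*(2-om))/2) as [N HN].
  rewrite Rabs_right by nra. nra. lra.
  exists N. specialize (HN N (le_n _)). rewrite Rabs_right in HN by (apply Rle_ge, pow_le; nra).
  assert (0 <= (om*rho)^N) by (apply pow_le; nra).
  assert (om * (1-rho) * rho < 1) by nra. nra.
Qed.

Definition MB (be : R) (sg : strategy) (m : nat) (c : nat -> bool) (k : nat) (h : list interval) : interval :=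
  match k with
  | O => (0, 1)
  | S k' => if Nat.even k' then sg h else ext (c ((k'/2)/S m)%nat) be (last h (0,0))
  end.

Definition PB be sg m c := mkplay (MB be sg m c).

Lemma MB_S be sg m c k' h : MB be sg m c (S k') h =
  if Nat.even k' then sg h else ext (c ((k'/2)/S m)%nat) be (last h (0,0)).
Proof. reflexivity. Qed.

Lemma history_S (p : play) k : history p (k+1) = history p k ++ p k :: nil.
Proof. unfold history. rewrite Nat.add_1_r, seq_S, map_app. reflexivity. Qed.

Lemma PB_odd be sg m c n : PB be sg m c (2*n+1)%nat = sg (history (PB be sg m c) (2*n+1)).
Proof.
  unfold PB. rewrite history_mk. unfold mkplay at 1.
  replace (2*n+1)%nat with (S (2*n)) by lia. rewrite MB_S, even2. reflexivity.
Qed.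

Lemma PB_even be sg m c n : PB be sg m c (2*n+2)%nat = ext (c (n / S m)%nat) be (PB be sg m c (2*n+1)%nat).
Proof.
  unfold PB. unfold mkplay at 1.
  replace (2*n+2)%nat with (S (2*n+1)) by lia. rewrite MB_S, odd2, div2b.
  rewrite <- last_hist. reflexivity.
Qed.

Lemma PB_legal al be sg m c : 0 < al < 1 -> 0 < be < 1 -> alice_strategy al sg ->
  legal_play al be (PB be sg m c).
Proof.
  intros Ha Hb Hs.
  assert (H : forall n, 0 < len (PB be sg m c (2*n)%nat) /\
     legal_alice al (PB be sg m c (2*n)%nat) (PB be sg m c (2*n+1)%nat) /\
     legal_bob be (PB be sg m c (2*n+1)%nat) (PB be sg m c (2*n+2)%nat)).
  { induction n as [|n IH].
    - assert (H0 : 0 < len (PB be sg m c (2*0)%nat)) by (unfold PB, mkplay; simpl; unfold len; simpl; lra).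
      assert (HA : legal_alice al (PB be sg m c (2*0)%nat) (PB be sg m c (2*0+1)%nat)).
      { rewrite PB_odd, history_S. apply Hs. exact H0. }
      split; [exact H0|]. split; [exact HA|].
      rewrite PB_even. apply ext_legal; auto. destruct HA as [_ E]. rewrite E. nra.
    - destruct IH as [H0 [[_ E1] [_ E2]]].
      assert (H1 : 0 < len (PB be sg m c (2*S n)%nat)).
      { replace (2 * S n)%nat with (2*n+2)%nat by lia. rewrite E2, E1.
        apply Rmult_lt_0_compat; [lra|]. apply Rmult_lt_0_compat; lra. }
      assert (HA : legal_alice al (PB be sg m c (2*S n)%nat) (PB be sg m c (2*S n+1)%nat)).
      { rewrite PB_odd, history_S. apply Hs. exact H1. }
      split; [exact H1|]. split; [exact HA|].
      rewrite PB_even. apply ext_legal; auto. destruct HA as [_ E]. rewrite E. nra. }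
  split.
  - destruct (H 0%nat) as [H0 _]. exact H0.
  - intro n. apply H.
Qed.

Lemma PB_prefix be sg m : forall k, exists j, forall c c', agree c c' j -> PB be sg m c k = PB be sg m c' k.
Proof.
  intro k. exists k. intros c c' Ha. unfold PB. apply (mk_agree _ _ (S k)); [|lia].
  intros k0 h Hk. destruct k0 as [|k']; [reflexivity|]. rewrite !MB_S.
  destruct (Nat.even k'); auto. rewrite Ha; auto.
  pose proof (bitle k' m). lia.
Qed.

Lemma negb_diff (b b' : bool) : b <> b' -> b' = negb b.
Proof. destruct b, b'; simpl; congruence. Qed.

Lemma PB_sep al be sg M : 0 < al < 1 -> 0 < be < 1 -> alice_strategy al sg ->
  2 * al * (1 - be) * be * (al*be)^M < 1 - be * (2 - al) ->
  forall c c' j, agree c c' j -> c j <> c' j ->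
  forall x y, in_all (PB be sg M c) x -> in_all (PB be sg M c') y -> x <> y.
Proof.
  intros Ha Hb Hs HM c c' j Hag Hne x y Hx Hy.
  set (m := S M). set (K0 := (2*(j*m)+1)%nat).
  pose proof (PB_legal al be sg M c Ha Hb Hs) as Lc.
  pose proof (PB_legal al be sg M c' Ha Hb Hs) as Lc'.
  assert (Hagr : PB be sg M c K0 = PB be sg M c' K0).
  { unfold PB. apply (mk_agree _ _ (S K0)); [|lia].
    intros k0 h Hk. destruct k0 as [|k']; [reflexivity|]. rewrite !MB_S.
    destruct (Nat.even k') eqn:Ev; auto.
    assert (k' <> (2*(j*m))%nat).
    { intro E. rewrite E, even2 in Ev. discriminate. }
    rewrite Hag; auto. apply bitbound. unfold K0, m in *. lia. }
  assert (Hpos : 0 < len (PB be sg M c K0)).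
  { apply (nested_len _ (legal_nested al be _ (proj1 Ha) (proj1 Hb) Lc)). }
  assert (Hstep : forall (d : nat -> bool) i, (i <= M)%nat ->
     PB be sg M d (K0 + 1 + 2*i)%nat = ext (d j) be (PB be sg M d (K0 + 2*i)%nat)).
  { intros d i Hi. replace (K0 + 1 + 2*i)%nat with (2*(j*m+i)+2)%nat by (unfold K0; lia).
    rewrite PB_even. unfold m. rewrite blockdiv by lia. f_equal. f_equal. unfold K0, m; lia. }
  assert (Hopp : forall d, legal_play al be (PB be sg M d) -> forall i, (i < M)%nat ->
     subinterval (PB be sg M d (K0+1+(2*i+1))%nat) (PB be sg M d (K0+1+2*i)%nat) /\
     len (PB be sg M d (K0+1+(2*i+1))%nat) = al * len (PB be sg M d (K0+1+2*i)%nat) /\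
     PB be sg M d (K0+1+(2*i+2))%nat = ext (d j) be (PB be sg M d (K0+1+(2*i+1))%nat)).
  { intros d [_ Ld] i Hi. destruct (Ld (j*m+i+1)%nat) as [[A1 A2] _].
    replace (K0+1+(2*i+1))%nat with (2*(j*m+i+1)+1)%nat by (unfold K0; lia).
    replace (K0+1+2*i)%nat with (2*(j*m+i+1))%nat by (unfold K0; lia).
    split; [exact A1|]. split; [exact A2|].
    replace (K0+1+(2*i+2))%nat with (K0 + 1 + 2*(S i))%nat by lia.
    rewrite Hstep by lia. f_equal. f_equal. unfold K0; lia. }
  apply (sep_core be al M (PB be sg M c) (PB be sg M c') K0 (c j) Hb Ha HM Hagr Hpos).
  - pose proof (Hstep c 0%nat (Nat.le_0_l _)) as E. rewrite !Nat.add_0_r in E. exact E.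
  - pose proof (Hstep c' 0%nat (Nat.le_0_l _)) as E. rewrite !Nat.add_0_r in E.
    rewrite <- (negb_diff _ _ Hne). exact E.
  - apply Hopp. exact Lc.
  - intros i Hi. rewrite <- (negb_diff _ _ Hne). apply Hopp; auto.
  - apply Hx.
  - apply Hy.
Qed.

Definition MA (al : R) (tau : strategy) (m : nat) (c : nat -> bool) (k : nat) (h : list interval) : interval :=
  match k with
  | O => tau nil
  | S k' => if Nat.even k' then ext (c ((k'/2)/S m)%nat) al (last h (0,0)) else tau h
  end.

Definition PA al tau m c := mkplay (MA al tau m c).

Lemma MA_S al tau m c k' h : MA al tau m c (S k') h =
  if Nat.even k' then ext (c ((k'/2)/S m)%nat) al (last h (0,0)) else tau h.
Proof. reflexivity. Qed.

Lemma PA_0 al tau m c : PA al tau m c 0%nat = tau nil.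
Proof. reflexivity. Qed.

Lemma PA_even al tau m c n : PA al tau m c (2*n+2)%nat = tau (history (PA al tau m c) (2*n+2)).
Proof.
  unfold PA. rewrite history_mk. unfold mkplay at 1.
  replace (2*n+2)%nat with (S (2*n+1)) by lia. rewrite MA_S, odd2. reflexivity.
Qed.

Lemma PA_odd al tau m c n : PA al tau m c (2*n+1)%nat = ext (c (n / S m)%nat) al (PA al tau m c (2*n)%nat).
Proof.
  unfold PA. unfold mkplay at 1.
  replace (2*n+1)%nat with (S (2*n)) by lia. rewrite MA_S, even2, div2a.
  rewrite <- last_hist. reflexivity.
Qed.

Lemma PA_legal al be tau m c : 0 < al < 1 -> 0 < be < 1 -> bob_strategy be tau ->
  legal_play al be (PA al tau m c).
Proof.
  intros Ha Hb [Hf Hs].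
  assert (H : forall n, 0 < len (PA al tau m c (2*n)%nat) /\
     legal_alice al (PA al tau m c (2*n)%nat) (PA al tau m c (2*n+1)%nat) /\
     legal_bob be (PA al tau m c (2*n+1)%nat) (PA al tau m c (2*n+2)%nat)).
  { induction n as [|n IH].
    - assert (H0 : 0 < len (PA al tau m c (2*0)%nat)) by exact Hf.
      assert (HA : legal_alice al (PA al tau m c (2*0)%nat) (PA al tau m c (2*0+1)%nat)).
      { rewrite PA_odd. apply ext_legal; auto. lra. }
      split; [exact H0|]. split; [exact HA|].
      rewrite PA_even. replace (2*0+2)%nat with ((2*0+1)+1)%nat by lia. rewrite history_S.
      apply Hs. destruct HA as [_ E]. rewrite E. nra.
    - destruct IH as [H0 [[_ E1] [_ E2]]].
      assert (H1 : 0 < len (PA al tau m c (2*S n)%nat)).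
      { replace (2 * S n)%nat with (2*n+2)%nat by lia. rewrite E2, E1.
        apply Rmult_lt_0_compat; [lra|]. apply Rmult_lt_0_compat; lra. }
      assert (HA : legal_alice al (PA al tau m c (2*S n)%nat) (PA al tau m c (2*S n+1)%nat)).
      { rewrite PA_odd. apply ext_legal; auto. lra. }
      split; [exact H1|]. split; [exact HA|].
      rewrite PA_even. replace (2*S n+2)%nat with ((2*S n+1)+1)%nat by lia. rewrite history_S.
      apply Hs. destruct HA as [_ E]. rewrite E. nra. }
  split.
  - destruct (H 0%nat) as [H0 _]. exact H0.
  - intro n. apply H.
Qed.

Lemma PA_prefix al tau m : forall k, exists j, forall c c', agree c c' j -> PA al tau m c k = PA al tau m c' k.
Proof.
  intro k. exists k. intros c c' Ha. unfold PA. apply (mk_agree _ _ (S k)); [|lia].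
  intros k0 h Hk. destruct k0 as [|k']; [reflexivity|]. rewrite !MA_S.
  destruct (Nat.even k'); auto. rewrite Ha; auto.
  pose proof (bitle k' m). lia.
Qed.

Lemma PA_sep al be tau M : 0 < al < 1 -> 0 < be < 1 -> bob_strategy be tau ->
  2 * be * (1 - al) * al * (be*al)^M < 1 - al * (2 - be) ->
  forall c c' j, agree c c' j -> c j <> c' j ->
  forall x y, in_all (PA al tau M c) x -> in_all (PA al tau M c') y -> x <> y.
Proof.
  intros Ha Hb Hs HM c c' j Hag Hne x y Hx Hy.
  set (m := S M). set (K0 := (2*(j*m))%nat).
  pose proof (PA_legal al be tau M c Ha Hb Hs) as Lc.
  pose proof (PA_legal al be tau M c' Ha Hb Hs) as Lc'.
  assert (Hagr : PA al tau M c K0 = PA al tau M c' K0).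
  { unfold PA. apply (mk_agree _ _ (S K0)); [|lia].
    intros k0 h Hk. destruct k0 as [|k']; [reflexivity|]. rewrite !MA_S.
    destruct (Nat.even k') eqn:Ev; auto.
    rewrite Hag; auto. apply bitbound. unfold K0, m in *. lia. }
  assert (Hpos : 0 < len (PA al tau M c K0)).
  { apply (nested_len _ (legal_nested al be _ (proj1 Ha) (proj1 Hb) Lc)). }
  assert (Hstep : forall (d : nat -> bool) i, (i <= M)%nat ->
     PA al tau M d (K0 + 1 + 2*i)%nat = ext (d j) al (PA al tau M d (K0 + 2*i)%nat)).
  { intros d i Hi. replace (K0 + 1 + 2*i)%nat with (2*(j*m+i)+1)%nat by (unfold K0; lia).
    rewrite PA_odd. unfold m. rewrite blockdiv by lia. f_equal. f_equal. unfold K0, m; lia. }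
  assert (Hopp : forall d, legal_play al be (PA al tau M d) -> forall i, (i < M)%nat ->
     subinterval (PA al tau M d (K0+1+(2*i+1))%nat) (PA al tau M d (K0+1+2*i)%nat) /\
     len (PA al tau M d (K0+1+(2*i+1))%nat) = be * len (PA al tau M d (K0+1+2*i)%nat) /\
     PA al tau M d (K0+1+(2*i+2))%nat = ext (d j) al (PA al tau M d (K0+1+(2*i+1))%nat)).
  { intros d [_ Ld] i Hi. destruct (Ld (j*m+i)%nat) as [_ [A1 A2]].
    replace (K0+1+(2*i+1))%nat with (2*(j*m+i)+2)%nat by (unfold K0; lia).
    replace (K0+1+2*i)%nat with (2*(j*m+i)+1)%nat by (unfold K0; lia).
    split; [exact A1|]. split; [exact A2|].
    replace (K0+1+(2*i+2))%nat with (K0 + 1 + 2*(S i))%nat by lia.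
    rewrite Hstep by lia. f_equal. f_equal. unfold K0; lia. }
  apply (sep_core al be M (PA al tau M c) (PA al tau M c') K0 (c j) Ha Hb HM Hagr Hpos).
  - pose proof (Hstep c 0%nat (Nat.le_0_l _)) as E. rewrite !Nat.add_0_r in E. exact E.
  - pose proof (Hstep c' 0%nat (Nat.le_0_l _)) as E. rewrite !Nat.add_0_r in E.
    rewrite <- (negb_diff _ _ Hne). exact E.
  - apply Hopp. exact Lc.
  - intros i Hi. rewrite <- (negb_diff _ _ Hne). apply Hopp; auto.
  - apply Hx.
  - apply Hy.
Qed.

Theorem theorem3 (alpha beta : R) (S : R -> Prop) :
  0 < alpha < 1 -> 0 < beta < 1 ->
  beta > 2 - 1 / alpha -> alpha > 2 - 1 / beta ->
  Bernstein S ->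
  ~ (exists sigma, alice_winning alpha beta S sigma) /\
  ~ (exists tau, bob_winning alpha beta S tau).
Proof.
  intros Ha Hb C1 C2 [B1 B2].
  assert (D1 : alpha * (2 - beta) < 1).
  { unfold Rdiv in C1. rewrite Rmult_1_l in C1.
    apply (Rmult_lt_compat_l alpha) in C1; [|lra]. rewrite Rmult_minus_distr_l, Rinv_r in C1 by lra. nra. }
  assert (D2 : beta * (2 - alpha) < 1).
  { unfold Rdiv in C2. rewrite Rmult_1_l in C2.
    apply (Rmult_lt_compat_l beta) in C2; [|lra]. rewrite Rmult_minus_distr_l, Rinv_r in C2 by lra. nra. }
  split.
  - intros [sg [Hs Hw]].
    destruct (choose_M beta alpha Hb Ha D2) as [M HM].
    set (P := PB beta sg M).
    destruct (generic P) as [Hcl Hun].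
    + intro c. apply (legal_nested alpha beta); try lra. apply PB_legal; auto.
    + apply PB_prefix.
    + apply (PB_sep alpha beta sg M Ha Hb Hs HM).
    + apply (B2 _ Hcl Hun). intros x [c Hx].
      assert (L := PB_legal alpha beta sg M c Ha Hb Hs).
      destruct (Hw (P c) L) as [y [Sy Hy]].
      { intro n. apply PB_odd. }
      replace x with y; auto.
      apply (uniq_pt alpha beta (P c)); auto.
  - intros [tau [Hs Hw]].
    destruct (choose_M alpha beta Ha Hb D1) as [M HM].
    set (P := PA alpha tau M).
    destruct (generic P) as [Hcl Hun].
    + intro c. apply (legal_nested alpha beta); try lra. apply PA_legal; auto.
    + apply PA_prefix.
    + apply (PA_sep alpha beta tau M Ha Hb Hs HM).
    + destruct (B1 _ Hcl Hun) as [x [[c Hx] Sx]].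
      apply (Hw (P c) (PA_legal alpha beta tau M c Ha Hb Hs)).
      { split. reflexivity. intro n. apply PA_even. }
      exists x. split; auto.
Qed.
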